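(* Let $k$ be an algebraically closed field of characteristic $2$, $S=\mathbf{V}(f)\subset\mathbb{A}^3$ with $f = x^2+y^2z+yz^2$, and $m\ge 5$. Let $R_m = k[x_0,\dots,x_m,y_0,\dots,y_m,z_0,\dots,z_m]$, $(\mathbb{A}^3)_m=\mathrm{Spec}\,R_m$, and define $f^{(j)}\in R_m$ by $f(\sum_{i=0}^m x_it^i,\sum_{i=0}^m y_it^i,\sum_{i=0}^m z_it^i) = \sum_{j=0}^m f^{(j)}t^j$ in $R_m[t]/\langle t^{m+1}\rangle$. Let $S_m^0 = \mathbf{V}(x_0,y_0,z_0,f^{(0)},\dots,f^{(m)})\subseteq(\mathbb{A}^3)_m$ be the singular fiber of the $m$-th jet scheme $S_m=\mathrm{Spec}\,R_m/\langle f^{(0)},\dots,f^{(m)}\rangle$. Define $I_m^0 = \langle x_0,x_1,x_2,y_0,y_1,z_0,z_1\rangle + \langle f^{(0)},\dots,f^{(m)}\rangle$, $I_m^1 = J_m^1 (R_m)_{z_1}\cap R_m$, $I_m^2 = J_m^2 (R_m)_{y_1}\cap R_m$, $I_m^3 = J_m^3 (R_m)_{y_1}\cap R_m$, where $J_m^1 = \langle x_0,x_1,y_0,y_1,z_0\rangle + \langle f^{(0)},\dots,f^{(m)}\rangle$, $J_m^2 = \langle x_0,x_1,y_0,z_0,z_1\rangle + \langle f^{(0)},\dots,f^{(m)}\rangle$, $J_m^3 = \langle x_0,x_1,y_0,z_0,y_1+z_1\rangle + \langle f^{(0)},\dots,f^{(m)}\rangle$, and $Z_m^i = \mathbf{V}(I_m^i)$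 for $i=0,1,2,3$ (these are the irreducible components of $S_m^0$). Then the maximal elements of $\{Z_m^i\cap Z_m^j \mid i,j\in\{0,1,2,3\},\ i\ne j\}$ with respect to inclusion are $Z_m^0\cap Z_m^1$, $Z_m^0\cap Z_m^2$ and $Z_m^0\cap Z_m^3$, and these three sets are pairwise distinct. In particular $Z_m^1\cap Z_m^2,\ Z_m^2\cap Z_m^3,\ Z_m^3\cap Z_m^1\subsetneq Z_m^0$.
   Context: $(R_m)_h$ is the localization of $R_m$ at powers of $h$; $\mathbf{V}(\cdot)$ denotes zero sets in $(\mathbb{A}^3)_m$. *)

(* Defs.v *)
From HB Require Import structures.
From mathcomp Require Import all_boot all_order all_algebra.
From mathcomp Require Import mpoly.
Set Implicit Arguments. Unset Strict Implicit. Unset Printing Implicit Defensive.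
Import GRing.Theory.
Local Open Scope ring_scope.

Definition nv (m : nat) : nat := (m.+1 + (m.+1 + m.+1))%N.

Definition ix (m : nat) (i : 'I_m.+1) : 'I_(nv m) := lshift _ i.
Definition iy (m : nat) (i : 'I_m.+1) : 'I_(nv m) := rshift m.+1 (lshift m.+1 i).
Definition iz (m : nat) (i : 'I_m.+1) : 'I_(nv m) := rshift m.+1 (rshift m.+1 i).

Section Jets.
Variable k : fieldType.
Variable m : nat.
Notation Rm := {mpoly k[nv m]}.

Definition xv (i : nat) : Rm := 'X_(ix (inord i)).
Definition yv (i : nat) : Rm := 'X_(iy (inord i)).
Definition zv (i : nat) : Rm := 'X_(iz (inord i)).

Definition arcX : {poly Rm} := \sum_(i < m.+1) ('X_(ix i))%:P * 'X^i.
Definition arcY : {poly Rm} := \sum_(i < m.+1) ('X_(iy i))%:P * 'X^i.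
Definition arcZ : {poly Rm} := \sum_(i < m.+1) ('X_(iz i))%:P * 'X^i.

(* f(x,y,z) = x^2 + y^2 z + y z^2 evaluated at the arcs; f^{(j)} is the
   coefficient of t^j (for j <= m this is the coefficient modulo t^{m+1}). *)
Definition farc : {poly Rm} :=
  arcX ^+ 2 + arcY ^+ 2 * arcZ + arcY * arcZ ^+ 2.
Definition fj (j : nat) : Rm := farc`_j.

Definition fgens : seq Rm := [seq fj j | j <- iota 0 m.+1].

Definition in_ideal (gens : seq Rm) (g : Rm) : Prop :=
  exists cs : seq Rm, size cs = size gens /\
    g = \sum_(i < size gens) cs`_i * gens`_i.

(* membership in J R_h ∩ R_m (saturation of J by h) *)
Definition in_sat (gens : seq Rm) (h g : Rm) : Prop :=
  exists N : nat, in_ideal gens (h ^+ N * g).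

Definition point := 'I_(nv m) -> k.
Definition zeroset (I : Rm -> Prop) : point -> Prop :=
  fun a => forall g, I g -> g.@[a] = 0.

Definition I0 : Rm -> Prop :=
  in_ideal ([:: xv 0; xv 1; xv 2; yv 0; yv 1; zv 0; zv 1] ++ fgens).
Definition I1 : Rm -> Prop :=
  in_sat ([:: xv 0; xv 1; yv 0; yv 1; zv 0] ++ fgens) (zv 1).
Definition I2 : Rm -> Prop :=
  in_sat ([:: xv 0; xv 1; yv 0; zv 0; zv 1] ++ fgens) (yv 1).
Definition I3 : Rm -> Prop :=
  in_sat ([:: xv 0; xv 1; yv 0; zv 0; yv 1 + zv 1] ++ fgens) (yv 1).

Definition Zm (i : nat) : point -> Prop :=
  zeroset (match i with 0 => I0 | 1 => I1 | 2 => I2 | _ => I3 end).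

End Jets.

Definition psub (T : Type) (A B : T -> Prop) : Prop := forall a, A a -> B a.
Definition pseteq (T : Type) (A B : T -> Prop) : Prop := psub A B /\ psub B A.
Definition pcap (T : Type) (A B : T -> Prop) : T -> Prop := fun a => A a /\ B a.
Definition psubproper (T : Type) (A B : T -> Prop) : Prop :=
  psub A B /\ ~ psub B A.

Definition in_family (k : fieldType) (m : nat) (A : point k m -> Prop) : Prop :=
  exists i j : nat, [/\ (i < 4)%N, (j < 4)%N, i != j &
    pseteq A (pcap (@Zm k m i) (@Zm k m j))].

Definition maximal_in_family (k : fieldType) (m : nat) (A : point k m -> Prop)
  : Prop :=
  in_family A /\ forall B, in_family B -> psub A B -> pseteq A B.

(* Main.v *)
Require Import Defs.
From HB Require Import structures.
From mathcomp Require Import all_boot all_order all_algebra.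
From mathcomp Require Import mpoly ring.
Set Implicit Arguments. Unset Strict Implicit. Unset Printing Implicit Defensive.
Import GRing.Theory.
Local Open Scope ring_scope.
Section Gen.
Variable R : comNzRingType.
Hypothesis two0 : (2%:R : R) = 0.

Definition Fp (X Y Z : {poly R}) := X ^+ 2 + Y ^+ 2 * Z + Y * Z ^+ 2.

Lemma coef1M (p q : {poly R}) : (p * q)`_1 = p`_0 * q`_1 + p`_1 * q`_0.
Proof. by rewrite coefM big_ord_recr big_ord1 /=. Qed.

Lemma dec2 (p : {poly R}) : p = (p`_0)%:P + (p`_1)%:P * 'X + 'X^2 * drop_poly 2 p.
Proof.
rewrite -{1}(poly_take_drop 2 p) [drop_poly _ _ * _]mulrC; congr (_ + _).
apply/polyP => i; rewrite coef_take_poly coefD coefC coefMX coefC.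
by case: i => [|[|i]] //=; rewrite ?addr0 ?add0r.
Qed.

Lemma comp1_coef (P Q D : {poly R}) :
  (Fp ('X^2 * P) ('X^2 * Q) ('X * D))`_5 = Q`_0 ^+ 2 * D`_0 + Q`_1 * D`_0 ^+ 2.
Proof.
have -> : Fp ('X^2 * P) ('X^2 * Q) ('X * D) =
   'X^4 * P ^+ 2 + 'X^5 * (Q ^+ 2 * D) + 'X^4 * (Q * D ^+ 2) by rewrite /Fp; ring.
rewrite !coefD !coefXnM /= !expr2 coef1M coef0M coef0M coef1M coef1M coef0M.
apply/eqP; rewrite -subr_eq0; apply/eqP.
transitivity (2%:R * (P`_0 * P`_1 + Q`_0 * D`_0 * D`_1)); first ring.
by rewrite two0 mul0r.
Qed.

Lemma comp2_coef (P Q D : {poly R}) :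
  (Fp ('X^2 * P) ('X * D) ('X^2 * Q))`_5 = Q`_0 ^+ 2 * D`_0 + Q`_1 * D`_0 ^+ 2.
Proof.
rewrite -(comp1_coef P); have -> // : Fp ('X^2 * P) ('X * D) ('X^2 * Q) = Fp ('X^2 * P) ('X^2 * Q) ('X * D).
rewrite /Fp; ring.
Qed.

Lemma comp3_coef (P U E : {poly R}) d :
  (Fp ('X^2 * P) ('X * (d%:P + 'X * U)) ('X * (- d%:P + 'X * E)))`_5
   = d * (d * (U`_1 + E`_1) + (U`_0 + E`_0) ^+ 2).
Proof.
have -> : Fp ('X^2 * P) ('X * (d%:P + 'X * U)) ('X * (- d%:P + 'X * E)) =
   'X^4 * P ^+ 2 + 'X^4 * ((d%:P + 'X * U) * (- d%:P + 'X * E) * (U + E))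
   by rewrite /Fp; ring.
rewrite !coefD !coefXnM /= !expr2 coef1M coef1M coef0M coef1M !coefD !coefN
  !coefC !coefXM /=.
apply/eqP; rewrite -subr_eq0; apply/eqP.
transitivity (2%:R * (P`_0 * P`_1 - d * d * (U`_1 + E`_1) - d * U`_0 * (U`_0 + E`_0)));
  first ring.
by rewrite two0 mul0r.
Qed.

Lemma Fp_shift (AX BX AY BY AZ BZ : {poly R}) :
  Fp (AX + BX) (AY + BY) (AZ + BZ) = Fp BX BY BZ
   + AX * (AX + 2%:R * BX) + AY * ((AZ + BZ) * (AY + 2%:R * BY + (AZ + BZ)))
   + AZ * (BY * (AZ + 2%:R * BZ + BY)).
Proof. rewrite /Fp; ring. Qed.


Lemma comp1_full (X Y Z : {poly R}) : exists E1 E2 E3 : {poly R},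
  (Fp X Y Z)`_5 = Z`_1 * (Z`_1 * Y`_3 + Y`_2 ^+ 2)
    + (((X`_0)%:P + (X`_1)%:P * 'X) * E1)`_5
    + (((Y`_0)%:P + (Y`_1)%:P * 'X) * E2)`_5
    + (((Z`_0)%:P + 0%:P * 'X) * E3)`_5.
Proof.
set AX := (X`_0)%:P + _; set AY := (Y`_0)%:P + _; set AZ := (Z`_0)%:P + _.
have eX : X = AX + 'X^2 * drop_poly 2 X by rewrite {1}(dec2 X).
have eY : Y = AY + 'X^2 * drop_poly 2 Y by rewrite {1}(dec2 Y).
have eZ : Z = AZ + 'X * ((Z`_1)%:P + 'X * drop_poly 2 Z).
  by rewrite {1}(dec2 Z) /AZ polyC0 mul0r addr0; ring.
do 3 eexists.
rewrite {1}eX {1}eY {1}eZ Fp_shift coefD coefD coefD comp1_coef.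
rewrite !coef_drop_poly !coefD coefC coefXM /= addr0.
congr (_ + _ + _ + _); ring.
Qed.

Lemma comp2_full (X Y Z : {poly R}) : exists E1 E2 E3 : {poly R},
  (Fp X Y Z)`_5 = Y`_1 * (Y`_1 * Z`_3 + Z`_2 ^+ 2)
    + (((X`_0)%:P + (X`_1)%:P * 'X) * E1)`_5
    + (((Y`_0)%:P + 0%:P * 'X) * E2)`_5
    + (((Z`_0)%:P + (Z`_1)%:P * 'X) * E3)`_5.
Proof.
set AX := (X`_0)%:P + _; set AY := (Y`_0)%:P + _; set AZ := (Z`_0)%:P + _.
have eX : X = AX + 'X^2 * drop_poly 2 X by rewrite {1}(dec2 X).
have eZ : Z = AZ + 'X^2 * drop_poly 2 Z by rewrite {1}(dec2 Z).
have eY : Y = AY + 'X * ((Y`_1)%:P + 'X * drop_poly 2 Y).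
  by rewrite {1}(dec2 Y) /AY polyC0 mul0r addr0; ring.
do 3 eexists.
rewrite {1}eX {1}eY {1}eZ Fp_shift coefD coefD coefD comp2_coef.
rewrite !coef_drop_poly !coefD coefC coefXM /= addr0.
congr (_ + _ + _ + _); ring.
Qed.

Lemma comp3_full (X Y Z : {poly R}) : exists E1 E2 E3 : {poly R},
  (Fp X Y Z)`_5 = Y`_1 * (Y`_1 * (Y`_3 + Z`_3) + (Y`_2 + Z`_2) ^+ 2)
    + (((X`_0)%:P + (X`_1)%:P * 'X) * E1)`_5
    + (((Y`_0)%:P + 0%:P * 'X) * E2)`_5
    + (((Z`_0)%:P + (Y`_1 + Z`_1)%:P * 'X) * E3)`_5.
Proof.
set AX := (X`_0)%:P + _; set AY := (Y`_0)%:P + _; set AZ := (Z`_0)%:P + _.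
have eX : X = AX + 'X^2 * drop_poly 2 X by rewrite {1}(dec2 X).
have eY : Y = AY + 'X * ((Y`_1)%:P + 'X * drop_poly 2 Y).
  by rewrite {1}(dec2 Y) /AY polyC0 mul0r addr0; ring.
have eZ : Z = AZ + 'X * (- (Y`_1)%:P + 'X * drop_poly 2 Z).
  by rewrite {1}(dec2 Z) /AZ polyCD; ring.
do 3 eexists.
rewrite {1}eX {1}eY {1}eZ Fp_shift coefD coefD coefD comp3_coef.
rewrite !coef_drop_poly.
congr (_ + _ + _ + _); ring.
Qed.

Lemma coef4 (X Y Z : {poly R}) : X`_0 = 0 -> X`_1 = 0 -> Y`_0 = 0 -> Y`_1 = 0 ->
  Z`_0 = 0 -> Z`_1 = 0 -> (Fp X Y Z)`_4 = X`_2 ^+ 2.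
Proof.
move=> hx0 hx1 hy0 hy1 hz0 hz1.
rewrite {1}(dec2 X) {1}(dec2 Y) {1}(dec2 Z) hx0 hx1 hy0 hy1 hz0 hz1 polyC0 !mul0r !add0r.
have -> : Fp ('X^2 * drop_poly 2 X) ('X^2 * drop_poly 2 Y) ('X^2 * drop_poly 2 Z) =
  'X^4 * (drop_poly 2 X) ^+ 2 + 'X^6 * ((drop_poly 2 Y) ^+ 2 * drop_poly 2 Z
     + drop_poly 2 Y * (drop_poly 2 Z) ^+ 2) by rewrite /Fp; ring.
by rewrite coefD !coefXnM /= addr0 expr2 coef0M coef_drop_poly.
Qed.
End Gen.

Section Ideal.
Variables (k : fieldType) (m : nat).
Notation Rm := {mpoly k[nv m]}.
Implicit Types (gens : seq Rm).

Lemma id0 gens : in_ideal gens 0.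
Proof.
exists (nseq (size gens) 0); rewrite size_nseq; split=> //.
by rewrite big1 // => i _; rewrite nth_nseq if_same mul0r.
Qed.

Lemma idD gens a b : in_ideal gens a -> in_ideal gens b -> in_ideal gens (a + b).
Proof.
move=> [ca [sa ->]] [cb [sb ->]].
exists (mkseq (fun i => ca`_i + cb`_i) (size gens)); rewrite size_mkseq; split=> //.
rewrite -big_split /=; apply: eq_bigr => i _.
by rewrite nth_mkseq ?ltn_ord // mulrDl.
Qed.

Lemma idM gens r a : in_ideal gens a -> in_ideal gens (r * a).
Proof.
move=> [ca [sa ->]].
exists (mkseq (fun i => r * ca`_i) (size gens)); rewrite size_mkseq; split=> //.
rewrite mulr_sumr; apply: eq_bigr => i _.
by rewrite nth_mkseq ?ltn_ord // mulrA.
Qed.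

Lemma idN gens a : in_ideal gens a -> in_ideal gens (- a).
Proof. by move=> /(idM (-1)); rewrite mulN1r. Qed.

Lemma idB gens a b : in_ideal gens a -> in_ideal gens b -> in_ideal gens (a - b).
Proof. by move=> ha hb; apply: idD => //; apply: idN. Qed.

Lemma idgen gens g : g \in gens -> in_ideal gens g.
Proof.
move=> hg; set j := index g gens.
have hj : (j < size gens)%N by rewrite index_mem.
exists (mkseq (fun i => (i == j)%:R) (size gens)); rewrite size_mkseq; split=> //.
rewrite (bigD1 (Ordinal hj)) //= big1 ?addr0.
  by rewrite nth_mkseq // eqxx mul1r nth_index.
move=> i /eqP hi; rewrite nth_mkseq ?ltn_ord //.
case: eqP => [hij|]; last by rewrite mul0r.
by case: hi; apply: val_inj.
Qed.

Lemma id_coefM gens (A E : {poly Rm}) j :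
  (forall i, in_ideal gens A`_i) -> in_ideal gens (A * E)`_j.
Proof.
move=> hA; rewrite coefM; apply: (big_ind (in_ideal gens)).
- exact: id0.
- exact: idD.
- by move=> i _; rewrite mulrC; apply: idM.
Qed.

Lemma id_lin gens a0 a1 i : in_ideal gens a0 -> in_ideal gens a1 ->
  in_ideal gens (a0%:P + a1%:P * 'X)`_i.
Proof.
move=> h0 h1; rewrite coefD coefC coefMX coefC.
case: i => [|[|i]] /=; rewrite ?addr0 ?add0r //; exact: id0.
Qed.

End Ideal.

Lemma id_split (k : fieldType) (m : nat) (gens : seq {mpoly k[nv m]}) f T a b c :
  in_ideal gens f -> f = T + a + b + c -> in_ideal gens a -> in_ideal gens b ->
  in_ideal gens c -> in_ideal gens T.
Proof.
move=> hf e ha hb hc.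
have -> : T = f - a - b - c by rewrite e; ring.
by apply: idB; [apply: idB; [apply: idB|]|].
Qed.

Section Jet.
Variables (k : fieldType) (m : nat).
Hypothesis hm : (5 <= m)%N.
Hypothesis two0k : (2%:R : k) = 0.
Notation Rm := {mpoly k[nv m]}.
Local Notation xv := (xv k m).
Local Notation yv := (yv k m).
Local Notation zv := (zv k m).
Local Notation arcX := (arcX k m).
Local Notation arcY := (arcY k m).
Local Notation arcZ := (arcZ k m).

Lemma two0R : (2%:R : Rm) = 0.
Proof. by rewrite -mpolyC_nat two0k. Qed.

Lemma arcX_poly : arcX = \poly_(i < m.+1) xv i.
Proof. by rewrite /arcX poly_def; apply: eq_bigr => i _; rewrite mul_polyC /xv inord_val. Qed.
Lemma arcY_poly : arcY = \poly_(i < m.+1) yv i.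
Proof. by rewrite /arcY poly_def; apply: eq_bigr => i _; rewrite mul_polyC /yv inord_val. Qed.
Lemma arcZ_poly : arcZ = \poly_(i < m.+1) zv i.
Proof. by rewrite /arcZ poly_def; apply: eq_bigr => i _; rewrite mul_polyC /zv inord_val. Qed.

Lemma farcE : farc k m = Fp arcX arcY arcZ.
Proof. by []. Qed.

Lemma fj_in (gens : seq Rm) j : (j <= m)%N -> in_ideal (gens ++ fgens k m) (fj k m j).
Proof.
move=> hj; apply: idgen; rewrite mem_cat; apply/orP; right.
by apply: map_f; rewrite mem_iota.
Qed.

Lemma gen_in (gens : seq Rm) g : g \in gens -> in_ideal (gens ++ fgens k m) g.
Proof. by move=> hg; apply: idgen; rewrite mem_cat hg. Qed.


Lemma gen_nth (gens : seq Rm) i : (i < size gens)%N ->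
  in_ideal (gens ++ fgens k m) (nth 0 gens i).
Proof. by move=> hi; apply: gen_in; apply: mem_nth. Qed.

Lemma id_eq2 (gens : seq Rm) a b x y : a = x -> b = y ->
  in_ideal gens (x + y) -> in_ideal gens (a + b).
Proof. by move=> -> ->. Qed.

Lemma coef_arcX i : (i <= 5)%N -> arcX`_i = xv i.
Proof. by move=> hi; rewrite arcX_poly coef_poly ltnS (leq_trans hi hm). Qed.
Lemma coef_arcY i : (i <= 5)%N -> arcY`_i = yv i.
Proof. by move=> hi; rewrite arcY_poly coef_poly ltnS (leq_trans hi hm). Qed.
Lemma coef_arcZ i : (i <= 5)%N -> arcZ`_i = zv i.
Proof. by move=> hi; rewrite arcZ_poly coef_poly ltnS (leq_trans hi hm). Qed.

Lemma cert1 : I1 (zv 1 * yv 3 + yv 2 ^+ 2).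
Proof.
exists 1%N; rewrite expr1.
have hf : in_ideal ([:: xv 0; xv 1; yv 0; yv 1; zv 0] ++ fgens k m) (Fp arcX arcY arcZ)`_5
  := fj_in _ hm.
have [E1 [E2 [E3 e]]] := comp1_full two0R arcX arcY arcZ.
have := id_split hf e.
rewrite -[yv 3](coef_arcY (i:=3) isT) -[yv 2](coef_arcY (i:=2) isT) -[zv 1](coef_arcZ (i:=1) isT).
apply.
- apply: id_coefM => i; apply: id_lin.
  + rewrite (coef_arcX (i:=0) isT); exact: (gen_nth (i:=0)).
  + rewrite (coef_arcX (i:=1) isT); exact: (gen_nth (i:=1)).
- apply: id_coefM => i; apply: id_lin.
  + rewrite (coef_arcY (i:=0) isT); exact: (gen_nth (i:=2)).
  + rewrite (coef_arcY (i:=1) isT); exact: (gen_nth (i:=3)).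
- apply: id_coefM => i; apply: id_lin.
  + rewrite (coef_arcZ (i:=0) isT); exact: (gen_nth (i:=4)).
  + exact: id0.

Qed.

Lemma cert2 : I2 (yv 1 * zv 3 + zv 2 ^+ 2).
Proof.
exists 1%N; rewrite expr1.
have hf : in_ideal ([:: xv 0; xv 1; yv 0; zv 0; zv 1] ++ fgens k m) (Fp arcX arcY arcZ)`_5
  := fj_in _ hm.
have [E1 [E2 [E3 e]]] := comp2_full two0R arcX arcY arcZ.
have := id_split hf e.
rewrite -[zv 3](coef_arcZ (i:=3) isT) -[zv 2](coef_arcZ (i:=2) isT) -[yv 1](coef_arcY (i:=1) isT).
apply.
- apply: id_coefM => i; apply: id_lin.
  + rewrite (coef_arcX (i:=0) isT); exact: (gen_nth (i:=0)).
  + rewrite (coef_arcX (i:=1) isT); exact: (gen_nth (i:=1)).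
- apply: id_coefM => i; apply: id_lin.
  + rewrite (coef_arcY (i:=0) isT); exact: (gen_nth (i:=2)).
  + exact: id0.
- apply: id_coefM => i; apply: id_lin.
  + rewrite (coef_arcZ (i:=0) isT); exact: (gen_nth (i:=3)).
  + rewrite (coef_arcZ (i:=1) isT); exact: (gen_nth (i:=4)).

Qed.

Lemma cert3 : I3 (yv 1 * (yv 3 + zv 3) + (yv 2 + zv 2) ^+ 2).
Proof.
exists 1%N; rewrite expr1.
have hf : in_ideal ([:: xv 0; xv 1; yv 0; zv 0; yv 1 + zv 1] ++ fgens k m)
   (Fp arcX arcY arcZ)`_5 := fj_in _ hm.
have [E1 [E2 [E3 e]]] := comp3_full two0R arcX arcY arcZ.
have := id_split hf e.
have -> : yv 1 * (yv 1 * (yv 3 + zv 3) + (yv 2 + zv 2) ^+ 2) =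
  arcY`_1 * (arcY`_1 * (arcY`_3 + arcZ`_3) + (arcY`_2 + arcZ`_2) ^+ 2).
  rewrite -[zv 3](coef_arcZ (i:=3) isT) -[zv 2](coef_arcZ (i:=2) isT).
  by rewrite -[yv 1](coef_arcY (i:=1) isT) -[yv 3](coef_arcY (i:=3) isT) -[yv 2](coef_arcY (i:=2) isT).
apply.
- apply: id_coefM => i; apply: id_lin.
  + rewrite (coef_arcX (i:=0) isT); exact: (gen_nth (i:=0)).
  + rewrite (coef_arcX (i:=1) isT); exact: (gen_nth (i:=1)).
- apply: id_coefM => i; apply: id_lin.
  + rewrite (coef_arcY (i:=0) isT); exact: (gen_nth (i:=2)).
  + exact: id0.
- apply: id_coefM => i; apply: id_lin.
  + rewrite (coef_arcZ (i:=0) isT); exact: (gen_nth (i:=3)).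
  + apply: (id_eq2 (coef_arcY (i:=1) isT) (coef_arcZ (i:=1) isT)); exact: (gen_nth (i:=4)).

Qed.

Lemma sat_gen (gens : seq Rm) h x : x \in gens -> in_sat gens h x.
Proof. by move=> hx; exists 0%N; rewrite expr0 mul1r; apply: idgen. Qed.

Lemma ideal_vanish (gens : seq Rm) g (a : point k m) :
  in_ideal gens g -> (forall x, x \in gens -> x.@[a] = 0) -> g.@[a] = 0.
Proof.
move=> [cs [hs ->]] hv; rewrite raddf_sum /=; apply: big1 => i _.
by rewrite mevalM (hv (gens`_i)) ?mulr0 //; apply: mem_nth.
Qed.

Definition PX (a : point k m) : {poly k} := \poly_(i < m.+1) a (ix (inord i)).
Definition PY (a : point k m) : {poly k} := \poly_(i < m.+1) a (iy (inord i)).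
Definition PZ (a : point k m) : {poly k} := \poly_(i < m.+1) a (iz (inord i)).

Lemma map_arcX a : map_poly (meval a) arcX = PX a.
Proof.
rewrite arcX_poly; apply/polyP => i; rewrite coef_map !coef_poly.
by case: ifP => _; [apply: mevalXU | apply: raddf0].
Qed.
Lemma map_arcY a : map_poly (meval a) arcY = PY a.
Proof.
rewrite arcY_poly; apply/polyP => i; rewrite coef_map !coef_poly.
by case: ifP => _; [apply: mevalXU | apply: raddf0].
Qed.
Lemma map_arcZ a : map_poly (meval a) arcZ = PZ a.
Proof.
rewrite arcZ_poly; apply/polyP => i; rewrite coef_map !coef_poly.
by case: ifP => _; [apply: mevalXU | apply: raddf0].
Qed.

Lemma map_Fp (g : {rmorphism Rm -> k}) (X Y Z : {poly Rm}) :
  map_poly g (Fp X Y Z) = Fp (map_poly g X) (map_poly g Y) (map_poly g Z).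
Proof. by rewrite /Fp !rmorphD !rmorphM !expr2. Qed.

Lemma eval_fj a j : (fj k m j).@[a] = (Fp (PX a) (PY a) (PZ a))`_j.
Proof.
rewrite /fj farcE -coef_map -map_arcX -map_arcY -map_arcZ.
pose g : {rmorphism Rm -> k} := meval a.
by rewrite (map_Fp g).
Qed.

Lemma coefPX a i : (i <= m)%N -> (PX a)`_i = (xv i).@[a].
Proof. by move=> hi; rewrite coef_poly ltnS hi mevalXU. Qed.
Lemma coefPY a i : (i <= m)%N -> (PY a)`_i = (yv i).@[a].
Proof. by move=> hi; rewrite coef_poly ltnS hi mevalXU. Qed.
Lemma coefPZ a i : (i <= m)%N -> (PZ a)`_i = (zv i).@[a].
Proof. by move=> hi; rewrite coef_poly ltnS hi mevalXU. Qed.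

End Jet.

Section Pts.
Variables (k : closedFieldType) (m : nat).
Hypothesis hm : (5 <= m)%N.
Hypothesis two0k : (2%:R : k) = 0.
Notation Rm := {mpoly k[nv m]}.
Local Notation xv := (xv k m).
Local Notation yv := (yv k m).
Local Notation zv := (zv k m).
Local Notation point := (point k m).

Definition mkpt (P Q W : {poly k}) : point := fun v =>
  match @split m.+1 (m.+1 + m.+1) v with
  | inl i => P`_i
  | inr w => match @split m.+1 m.+1 w with inl i => Q`_i | inr i => W`_i end
  end.

Lemma mkptX P Q W (i : 'I_m.+1) : mkpt P Q W (ix i) = P`_i.
Proof. by rewrite /mkpt /ix (unsplitK (inl _)). Qed.
Lemma mkptY P Q W (i : 'I_m.+1) : mkpt P Q W (iy i) = Q`_i.
Proof. by rewrite /mkpt /iy (unsplitK (inr _)) (unsplitK (inl _)). Qed.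
Lemma mkptZ P Q W (i : 'I_m.+1) : mkpt P Q W (iz i) = W`_i.
Proof. by rewrite /mkpt /iz (unsplitK (inr _)) (unsplitK (inr _)). Qed.

Lemma eval_xv P Q W i : (i <= 5)%N -> (xv i).@[mkpt P Q W] = P`_i.
Proof. by move=> hi; rewrite mevalXU mkptX inordK // ltnS (leq_trans hi hm). Qed.
Lemma eval_yv P Q W i : (i <= 5)%N -> (yv i).@[mkpt P Q W] = Q`_i.
Proof. by move=> hi; rewrite mevalXU mkptY inordK // ltnS (leq_trans hi hm). Qed.
Lemma eval_zv P Q W i : (i <= 5)%N -> (zv i).@[mkpt P Q W] = W`_i.
Proof. by move=> hi; rewrite mevalXU mkptZ inordK // ltnS (leq_trans hi hm). Qed.

Definition small (P : {poly k}) := forall j, (2 < j)%N -> P`_j = 0.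

Lemma PX_mkpt P Q W : small P -> PX (mkpt P Q W) = P.
Proof.
move=> hP; apply/polyP => j; rewrite coef_poly; case: ltnP => hj.
  by rewrite mkptX inordK.
by rewrite hP //; apply: leq_ltn_trans hj; apply: leq_trans hm.
Qed.
Lemma PY_mkpt P Q W : small Q -> PY (mkpt P Q W) = Q.
Proof.
move=> hP; apply/polyP => j; rewrite coef_poly; case: ltnP => hj.
  by rewrite mkptY inordK.
by rewrite hP //; apply: leq_ltn_trans hj; apply: leq_trans hm.
Qed.
Lemma PZ_mkpt P Q W : small W -> PZ (mkpt P Q W) = W.
Proof.
move=> hP; apply/polyP => j; rewrite coef_poly; case: ltnP => hj.
  by rewrite mkptZ inordK.
by rewrite hP //; apply: leq_ltn_trans hj; apply: leq_trans hm.
Qed.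

Lemma eval_fj_mkpt P Q W j : small P -> small Q -> small W ->
  (fj k m j).@[mkpt P Q W] = (Fp P Q W)`_j.
Proof. by move=> hP hQ hW; rewrite eval_fj PX_mkpt // PY_mkpt // PZ_mkpt. Qed.

Lemma mkpt_lin P1 Q1 W1 P2 Q2 W2 s v :
  mkpt P1 Q1 W1 v + s * mkpt P2 Q2 W2 v =
  mkpt (P1 + s%:P * P2) (Q1 + s%:P * Q2) (W1 + s%:P * W2) v.
Proof.
rewrite /mkpt; case: split => [i|w]; last case: split => i; by rewrite coefD coefCM.
Qed.

Lemma gens_vanish (L : seq Rm) a :
  all (fun x => x.@[a] == 0) L ->
  (forall j, (j <= m)%N -> (fj k m j).@[a] = 0) ->
  forall x, x \in L ++ fgens k m -> x.@[a] = 0.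
Proof.
move=> /allP hL hF x; rewrite mem_cat => /orP [/hL /eqP //|].
by move=> /mapP [j]; rewrite mem_iota add0n ltnS => /hF h ->.
Qed.

Lemma curve (gens : seq Rm) h g (c d : point) :
  in_sat gens h g ->
  (forall s x, x \in gens -> x.@[fun v => c v + s * d v] = 0) ->
  (forall s, s != 0 -> h.@[fun v => c v + s * d v] != 0) ->
  g.@[c] = 0.
Proof.
case=> N hN hv hh.
pose q := mmap (@polyC k) (fun v => (c v)%:P + (d v)%:P * 'X) g.
have hq : forall s, q.[s] = g.@[fun v => c v + s * d v].
  move=> s; rewrite /q /mmap horner_sum mevalE; apply: eq_bigr => mo _.
  rewrite hornerM hornerC /mmap1 horner_prod; congr (_ * _); apply: eq_bigr => i _.
  by rewrite horner_exp hornerD hornerC hornerMX hornerC mulrC.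
have hz : forall s, s != 0 -> q.[s] = 0.
  move=> s hs; rewrite hq.
  have := ideal_vanish hN (hv s); rewrite mevalM rmorphXn => /eqP.
  rewrite mulf_eq0 expf_eq0 (negbTE (hh s hs)) andbF /= => /eqP //.
have q0 : q = 0.
  apply/eqP; apply: contraT => hq0.
  have : size (q * 'X + 1%:P) != 1%N.
    by rewrite size_MXaddC (negbTE hq0) /= eqSS size_poly_eq0.
  move/closed_rootP => [x /rootP]; rewrite hornerMXaddC.
  case: (eqVneq x 0) => [->|hx]; first by rewrite mulr0 add0r => /eqP; rewrite oner_eq0.
  by rewrite hz // mul0r add0r => /eqP; rewrite oner_eq0.
have := hq 0; rewrite q0 horner0 => ->.
by apply: meval_eq => v; rewrite mul0r addr0.
Qed.


Lemma Z0_from (a : point) :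
  (forall j, (j <= m)%N -> (fj k m j).@[a] = 0) ->
  (xv 0).@[a] = 0 -> (xv 1).@[a] = 0 -> (yv 0).@[a] = 0 -> (yv 1).@[a] = 0 ->
  (zv 0).@[a] = 0 -> (zv 1).@[a] = 0 -> @Zm k m 0 a.
Proof.
move=> hF hx0 hx1 hy0 hy1 hz0 hz1.
have hx2 : (xv 2).@[a] = 0.
  have := hF 4%N (leq_trans (isT : (4 <= 5)%N) hm).
  rewrite eval_fj coef4; last first.
  - by rewrite coefPZ // (leq_trans _ hm).
  - by rewrite coefPZ // (leq_trans _ hm).
  - by rewrite coefPY // (leq_trans _ hm).
  - by rewrite coefPY // (leq_trans _ hm).
  - by rewrite coefPX // (leq_trans _ hm).
  - by rewrite coefPX // (leq_trans _ hm).
  by rewrite coefPX ?(leq_trans _ hm) // => /eqP; rewrite expf_eq0 /= => /eqP.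
move=> g hg; apply: (ideal_vanish hg); apply: gens_vanish => //=.
by rewrite hx0 hx1 hx2 hy0 hy1 hz0 hz1 eqxx.
Qed.

Lemma sat_vanish (L : seq Rm) h a x : zeroset (in_sat (L ++ fgens k m) h) a ->
  x \in L -> x.@[a] = 0.
Proof. by move=> hz hx; apply: hz; apply: sat_gen; rewrite mem_cat hx. Qed.
Lemma sat_vanish_fj (L : seq Rm) h a j : zeroset (in_sat (L ++ fgens k m) h) a ->
  (j <= m)%N -> (fj k m j).@[a] = 0.
Proof.
move=> hz hj; apply: hz; apply: sat_gen; rewrite mem_cat; apply/orP; right.
by apply: map_f; rewrite mem_iota.
Qed.

Lemma Z12 a : @Zm k m 1 a -> @Zm k m 2 a -> @Zm k m 0 a.
Proof.
move=> z1 z2; apply: Z0_from.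
- by move=> j; apply: (sat_vanish_fj z1).
- by apply: (sat_vanish z1); rewrite !inE eqxx.
- by apply: (sat_vanish z1); rewrite !inE eqxx ?orbT.
- by apply: (sat_vanish z1); rewrite !inE eqxx ?orbT.
- by apply: (sat_vanish z1); rewrite !inE eqxx ?orbT.
- by apply: (sat_vanish z1); rewrite !inE eqxx ?orbT.
- by apply: (sat_vanish z2); rewrite !inE eqxx ?orbT.
Qed.

Lemma Z13 a : @Zm k m 1 a -> @Zm k m 3 a -> @Zm k m 0 a.
Proof.
move=> z1 z3.
have hy1 : (yv 1).@[a] = 0 by apply: (sat_vanish z1); rewrite !inE eqxx ?orbT.
apply: Z0_from => //.
- by move=> j; apply: (sat_vanish_fj z1).
- by apply: (sat_vanish z1); rewrite !inE eqxx.
- by apply: (sat_vanish z1); rewrite !inE eqxx ?orbT.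
- by apply: (sat_vanish z1); rewrite !inE eqxx ?orbT.
- by apply: (sat_vanish z1); rewrite !inE eqxx ?orbT.
- have : (yv 1 + zv 1).@[a] = 0 by apply: (sat_vanish z3); rewrite !inE eqxx ?orbT.
  by rewrite mevalD hy1 add0r.
Qed.

Lemma Z23 a : @Zm k m 2 a -> @Zm k m 3 a -> @Zm k m 0 a.
Proof.
move=> z2 z3.
have hz1 : (zv 1).@[a] = 0 by apply: (sat_vanish z2); rewrite !inE eqxx ?orbT.
apply: Z0_from => //.
- by move=> j; apply: (sat_vanish_fj z2).
- by apply: (sat_vanish z2); rewrite !inE eqxx.
- by apply: (sat_vanish z2); rewrite !inE eqxx ?orbT.
- by apply: (sat_vanish z2); rewrite !inE eqxx ?orbT.
- have : (yv 1 + zv 1).@[a] = 0 by apply: (sat_vanish z3); rewrite !inE eqxx ?orbT.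
  by rewrite mevalD hz1 addr0.
- by apply: (sat_vanish z2); rewrite !inE eqxx ?orbT.
Qed.

Lemma hcapZ i j : (0 < i < 4)%N -> (0 < j < 4)%N -> i != j ->
  forall a, @Zm k m i a -> @Zm k m j a -> @Zm k m 0 a.
Proof.
case: i => [|[|[|[|i]]]] //; case: j => [|[|[|[|j]]]] //= _ _ _ a za zb.
- exact: Z12 za zb.
- exact: Z13 za zb.
- exact: Z12 zb za.
- exact: Z23 za zb.
- exact: Z13 zb za.
- exact: Z23 zb za.
Qed.

Lemma small0 : small 0. Proof. by move=> j _; rewrite coef0. Qed.
Lemma smallX : small 'X. Proof. by move=> [|[|[|j]]] // _; rewrite coefX. Qed.
Lemma smallX2 : small 'X^2. Proof. by move=> [|[|[|j]]] // _; rewrite coefXn. Qed.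
Lemma small_lin P Q s : small P -> small Q -> small (P + s%:P * Q).
Proof. by move=> hP hQ j hj; rewrite coefD coefCM hP // hQ // mulr0 addr0. Qed.

Lemma Zsat_pt (L : seq Rm) h P1 Q1 W1 P2 Q2 W2 :
  small P1 -> small Q1 -> small W1 -> small P2 -> small Q2 -> small W2 ->
  (forall s, all (fun x => x.@[mkpt (P1 + s%:P * P2) (Q1 + s%:P * Q2) (W1 + s%:P * W2)] == 0) L) ->
  (forall s, Fp (P1 + s%:P * P2) (Q1 + s%:P * Q2) (W1 + s%:P * W2) = 0) ->
  (forall s, s != 0 -> h.@[mkpt (P1 + s%:P * P2) (Q1 + s%:P * Q2) (W1 + s%:P * W2)] != 0) ->
  zeroset (in_sat (L ++ fgens k m) h) (mkpt P1 Q1 W1).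
Proof.
move=> sP1 sQ1 sW1 sP2 sQ2 sW2 hL hF hh g hg.
apply: (curve hg (d := mkpt P2 Q2 W2)).
- move=> s x hx.
  rewrite (@meval_eq _ _ _ (mkpt (P1 + s%:P * P2) (Q1 + s%:P * Q2) (W1 + s%:P * W2)) x
     (fun v => mkpt_lin _ _ _ _ _ _ s v)).
  apply: gens_vanish hx => // j _.
  by rewrite eval_fj_mkpt ?hF ?coef0 //; apply: small_lin.
- move=> s hs.
  rewrite (@meval_eq _ _ _ (mkpt (P1 + s%:P * P2) (Q1 + s%:P * Q2) (W1 + s%:P * W2)) h
     (fun v => mkpt_lin _ _ _ _ _ _ s v)).
  exact: hh.
Qed.

Definition p1 := mkpt 0 0 'X^2.
Definition p2 := mkpt 0 'X^2 0.
Definition p3 := mkpt 0 'X^2 'X^2.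

Lemma two0P : (2%:R : {poly k}) = 0.
Proof. by rewrite -polyC_natr two0k polyC0. Qed.

Lemma Fp00 (W : {poly k}) : Fp 0 0 W = 0. Proof. rewrite /Fp; ring. Qed.
Lemma Fp0W0 (W : {poly k}) : Fp 0 W 0 = 0. Proof. rewrite /Fp; ring. Qed.
Lemma Fp0WW (W : {poly k}) : Fp 0 W W = 0.
Proof.
have -> : Fp 0 W W = 2%:R * W ^+ 3 by rewrite /Fp; ring.
by rewrite two0P mul0r.
Qed.

Definition coefS := (coefD, coefCM, coefXn, coefX, coef0).

Lemma p1_Z0 : @Zm k m 0 p1.
Proof.
rewrite /p1; apply: Z0_from; rewrite ?eval_xv ?eval_yv ?eval_zv // ?coefS //=.
move=> j _; rewrite eval_fj_mkpt; try solve [exact: small0 | exact: smallX2].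
by rewrite /Fp !expr2 !mul0r !add0r coef0.
Qed.
Lemma p2_Z0 : @Zm k m 0 p2.
Proof.
rewrite /p2; apply: Z0_from; rewrite ?eval_xv ?eval_yv ?eval_zv // ?coefS //=.
move=> j _; rewrite eval_fj_mkpt; try solve [exact: small0 | exact: smallX2].
by rewrite /Fp !expr2 !mul0r !mulr0 !add0r coef0.
Qed.
Lemma p3_Z0 : @Zm k m 0 p3.
Proof.
rewrite /p3; apply: Z0_from; rewrite ?eval_xv ?eval_yv ?eval_zv // ?coefS //=.
move=> j _; rewrite eval_fj_mkpt; try solve [exact: small0 | exact: smallX2].
by rewrite /Fp expr2 mul0r add0r [_ * _ ^+ 2]mulrC -mulr2n -mulr_natr two0P mulr0 coef0.
Qed.


Ltac csimp := rewrite ?coefS /= ?mulr0n ?mulr1n ?mulr0 ?mul0r ?mulr1 ?addr0 ?add0r ?eqxx.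

Lemma p1_Z1 : @Zm k m 1 p1.
Proof.
rewrite /p1; apply: (Zsat_pt (P2 := 0) (Q2 := 0) (W2 := 'X));
  try solve [exact: small0 | exact: smallX2 | exact: smallX].
- by move=> s /=; rewrite !eval_xv ?eval_yv ?eval_zv //; csimp.
- move=> s; rewrite mulr0 addr0 /Fp !expr2 !mul0r !add0r //.
- by move=> s hs; rewrite eval_zv //; csimp.
Qed.

Lemma p2_Z2 : @Zm k m 2 p2.
Proof.
rewrite /p2; apply: (Zsat_pt (P2 := 0) (Q2 := 'X) (W2 := 0));
  try solve [exact: small0 | exact: smallX2 | exact: smallX].
- by move=> s /=; rewrite !eval_xv ?eval_yv ?eval_zv //; csimp.
- move=> s; rewrite !mulr0 !addr0 /Fp !expr2 !mul0r !mulr0 !add0r //.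
- by move=> s hs; rewrite eval_yv //; csimp.
Qed.

Lemma p3_Z3 : @Zm k m 3 p3.
Proof.
rewrite /p3; apply: (Zsat_pt (P2 := 0) (Q2 := 'X) (W2 := 'X));
  try solve [exact: small0 | exact: smallX2 | exact: smallX].
- move=> s /=; rewrite mevalD !eval_xv ?eval_yv ?eval_zv //; csimp.
  by rewrite -mulr2n -mulr_natr two0k mulr0 eqxx.
- move=> s; rewrite mulr0 addr0 /Fp expr2 mul0r add0r [_ * _ ^+ 2]mulrC -mulr2n.
  by rewrite -mulr_natr two0P mulr0.
- by move=> s hs; rewrite eval_yv //; csimp.
Qed.


Ltac nz_tac c :=
  let z := fresh in move=> z; move: (z _ c);
  rewrite ?(mevalD, mevalM, rmorphXn); repeat (rewrite eval_yv //); repeat (rewrite eval_zv //);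
  csimp; rewrite ?expr1n ?mulr1; move/eqP; apply/negP; exact: oner_neq0.

Lemma p1_nZ2 : ~ @Zm k m 2 p1.
Proof. rewrite /p1; nz_tac (cert2 hm two0k). Qed.
Lemma p1_nZ3 : ~ @Zm k m 3 p1.
Proof. rewrite /p1; nz_tac (cert3 hm two0k). Qed.
Lemma p2_nZ1 : ~ @Zm k m 1 p2.
Proof. rewrite /p2; nz_tac (cert1 hm two0k). Qed.
Lemma p2_nZ3 : ~ @Zm k m 3 p2.
Proof. rewrite /p2; nz_tac (cert3 hm two0k). Qed.
Lemma p3_nZ1 : ~ @Zm k m 1 p3.
Proof. rewrite /p3; nz_tac (cert1 hm two0k). Qed.
Lemma p3_nZ2 : ~ @Zm k m 2 p3.
Proof. rewrite /p3; nz_tac (cert2 hm two0k). Qed.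
End Pts.

Section Logic.
Variables (T : Type) (Z : nat -> T -> Prop).

Definition fam (A : T -> Prop) : Prop :=
  exists i j : nat, [/\ (i < 4)%N, (j < 4)%N, i != j &
    pseteq A (pcap (Z i) (Z j))].

Lemma pseteq_trans (A B C : T -> Prop) : pseteq A B -> pseteq B C -> pseteq A C.
Proof. by move=> [h1 h2] [h3 h4]; split=> a ha; [apply: h3; apply: h1 | apply: h2; apply: h4]. Qed.
Lemma pseteq_sym (A B : T -> Prop) : pseteq A B -> pseteq B A.
Proof. by move=> [h1 h2]; split. Qed.
Lemma pcapC (A B : T -> Prop) : pseteq (pcap A B) (pcap B A).
Proof. by split=> a [h1 h2]; split. Qed.

Hypothesis hcap : forall i j, (0 < i < 4)%N -> (0 < j < 4)%N -> i != j ->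
  forall a, Z i a -> Z j a -> Z 0 a.

Lemma max_of i p : (0 < i < 4)%N ->
  (forall j, (j < 4)%N -> (Z j p <-> (j == 0)%N || (j == i))) ->
  forall A, pseteq A (pcap (Z 0) (Z i)) ->
  forall B, fam B -> psub A B -> pseteq A B.
Proof.
move=> hi hp A hA B [j [l [hj hl hjl hB]]] hAB.
have pA : A p.
  by apply: hA.2; split; [apply/(hp 0 isT) | apply/(hp i _)]; rewrite ?eqxx ?orbT //; case/andP: hi.
have [pj pl] := hB.1 p (hAB p pA).
have := (hp j hj).1 pj; have := (hp l hl).1 pl.
case/orP => /eqP el; case/orP => /eqP ej; subst; rewrite ?eqxx in hjl => //.
- apply: (pseteq_trans hA); apply: pseteq_sym; apply: (pseteq_trans hB); exact: pcapC.
- apply: (pseteq_trans hA); exact: pseteq_sym.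
Qed.

Variables (p1 p2 p3 : T).
Hypotheses (h1 : forall j, (j < 4)%N -> (Z j p1 <-> (j == 0)%N || (j == 1)%N))
  (h2 : forall j, (j < 4)%N -> (Z j p2 <-> (j == 0)%N || (j == 2)%N))
  (h3 : forall j, (j < 4)%N -> (Z j p3 <-> (j == 0)%N || (j == 3)%N)).

Lemma fam0 i : (0 < i < 4)%N -> fam (pcap (Z 0) (Z i)).
Proof.
move=> /andP [hi0 hi4]; exists 0%N, i; split=> //; first by rewrite eq_sym -lt0n.
by split.
Qed.

Lemma logic :
  (forall A, (fam A /\ (forall B, fam B -> psub A B -> pseteq A B)) <->
     (pseteq A (pcap (Z 0) (Z 1)) \/ pseteq A (pcap (Z 0) (Z 2)) \/
      pseteq A (pcap (Z 0) (Z 3))))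
  /\ ~ pseteq (pcap (Z 0) (Z 1)) (pcap (Z 0) (Z 2))
  /\ ~ pseteq (pcap (Z 0) (Z 2)) (pcap (Z 0) (Z 3))
  /\ ~ pseteq (pcap (Z 0) (Z 1)) (pcap (Z 0) (Z 3))
  /\ psubproper (pcap (Z 1) (Z 2)) (Z 0)
  /\ psubproper (pcap (Z 2) (Z 3)) (Z 0)
  /\ psubproper (pcap (Z 3) (Z 1)) (Z 0).
Proof.
split; [|split; [|split; [|split; [|split; [|split]]]]].
- move=> A; split.
  + move=> [[i [j [hi hj hij hA]]] hmax].
    have key : forall i', (0 < i' < 4)%N -> pseteq A (pcap (Z 0) (Z i')) ->
       pseteq A (pcap (Z 0) (Z 1)) \/ pseteq A (pcap (Z 0) (Z 2)) \/
       pseteq A (pcap (Z 0) (Z 3)).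
      move=> i'; case: i' => [|[|[|[|i']]]] //= _ h; tauto.
    case: (posnP i) => [i0|ip].
      subst i; apply: (key j) => //; rewrite hj andbT lt0n eq_sym //.
    case: (posnP j) => [j0|jp].
      subst j; apply: (key i); first by rewrite ip hi.
      by apply: (pseteq_trans hA); exact: pcapC.
    apply: (key i); first by rewrite ip hi.
    apply: hmax; first by apply: fam0; rewrite ip hi.
    move=> a /(hA.1 a) [zi zj]; split=> //.
    by apply: (hcap (i := i) (j := j)); rewrite ?ip ?jp ?hi ?hj.
  + have hi1 : (0 < 1 < 4)%N by []. have hi2 : (0 < 2 < 4)%N by [].
    have hi3 : (0 < 3 < 4)%N by [].
    case=> [hA|[hA|hA]]; split.
    * by exists 0%N, 1%N; split.
    * exact: (max_of hi1 h1 hA).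
    * by exists 0%N, 2%N; split.
    * exact: (max_of hi2 h2 hA).
    * by exists 0%N, 3%N; split.
    * exact: (max_of hi3 h3 hA).
- move=> [hs _]; have := hs p1 (conj ((h1 (j:=0) isT).2 isT) ((h1 (j:=1) isT).2 isT)).
  by case=> _ /(h1 (j:=2) isT).
- move=> [hs _]; have := hs p2 (conj ((h2 (j:=0) isT).2 isT) ((h2 (j:=2) isT).2 isT)).
  by case=> _ /(h2 (j:=3) isT).
- move=> [hs _]; have := hs p1 (conj ((h1 (j:=0) isT).2 isT) ((h1 (j:=1) isT).2 isT)).
  by case=> _ /(h1 (j:=3) isT).
- split; first by move=> a [za zb]; apply: (hcap (i:=1) (j:=2)).
  by move=> hs; have [/(h3 (j:=1) isT)] := hs p3 ((h3 (j:=0) isT).2 isT).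
- split; first by move=> a [za zb]; apply: (hcap (i:=2) (j:=3)).
  by move=> hs; have [/(h1 (j:=2) isT)] := hs p1 ((h1 (j:=0) isT).2 isT).
- split; first by move=> a [za zb]; apply: (hcap (i:=3) (j:=1)).
  by move=> hs; have [_ /(h2 (j:=1) isT)] := hs p2 ((h2 (j:=0) isT).2 isT).
Qed.
End Logic.

Unset Implicit Arguments.
Set Strict Implicit.

Theorem theorem3p8 (k : closedFieldType) (hchar : 2%N \in [pchar k])
  (m : nat) (hm : (5 <= m)%N) :
  let Z := @Zm k m in
  (forall A : point k m -> Prop,
     maximal_in_family A <->
       (pseteq A (pcap (Z 0%N) (Z 1%N)) \/ pseteq A (pcap (Z 0%N) (Z 2%N)) \/
        pseteq A (pcap (Z 0%N) (Z 3%N))))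
  /\ ~ pseteq (pcap (Z 0%N) (Z 1%N)) (pcap (Z 0%N) (Z 2%N))
  /\ ~ pseteq (pcap (Z 0%N) (Z 2%N)) (pcap (Z 0%N) (Z 3%N))
  /\ ~ pseteq (pcap (Z 0%N) (Z 1%N)) (pcap (Z 0%N) (Z 3%N))
  /\ psubproper (pcap (Z 1%N) (Z 2%N)) (Z 0%N)
  /\ psubproper (pcap (Z 2%N) (Z 3%N)) (Z 0%N)
  /\ psubproper (pcap (Z 3%N) (Z 1%N)) (Z 0%N).
Proof.
move=> Z.
have two0k : (2%:R : k) = 0 := pcharf0 hchar.
have e1 : forall j, (j < 4)%N -> (@Zm k m j (@p1 k m) <-> (j == 0)%N || (j == 1)%N).
  case=> [|[|[|[|j]]]] // _; split=> //= h.
  - exact: p1_Z0 hm.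
  - exact: p1_Z1 hm.
  - by case: (p1_nZ2 hm two0k h).
  - by case: (p1_nZ3 hm two0k h).
have e2 : forall j, (j < 4)%N -> (@Zm k m j (@p2 k m) <-> (j == 0)%N || (j == 2)%N).
  case=> [|[|[|[|j]]]] // _; split=> //= h.
  - exact: p2_Z0 hm.
  - by case: (p2_nZ1 hm two0k h).
  - exact: p2_Z2 hm.
  - by case: (p2_nZ3 hm two0k h).
have e3 : forall j, (j < 4)%N -> (@Zm k m j (@p3 k m) <-> (j == 0)%N || (j == 3)%N).
  case=> [|[|[|[|j]]]] // _; split=> //= h.
  - exact: p3_Z0 hm two0k.
  - by case: (p3_nZ1 hm two0k h).
  - by case: (p3_nZ2 hm two0k h).
  - exact: p3_Z3 hm two0k.
exact: (logic (hcapZ hm) e1 e2 e3).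
Qed.
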